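(* Let $P,F,A_I,A_O,B_I,B_O$ be finite-dimensional Hilbert spaces with $A_I\cong A_O$, $B_I\cong B_O$, $P\cong F$ (identified via their computational bases), and let $|w\rangle\in P\otimes A_I\otimes A_O\otimes B_I\otimes B_O\otimes F$ be such that $|w\rangle\langle w|$ is a pure process. Define $$|w_r\rangle:=(\mathrm{SWAP}_{PF}\otimes\mathrm{SWAP}_{A_IA_O}\otimes\mathrm{SWAP}_{B_IB_O})\,|w^*\rangle,$$ where $|w^*\rangle$ is the entrywise complex conjugate of $|w\rangle$ in the computational basis and $\mathrm{SWAP}_{XY}$ exchanges the isomorphic factors $X$ and $Y$. Then $|w_r\rangle\langle w_r|$ is a valid pure process.
   Context: All Hilbert spaces are finite-dimensional with fixed computational bases; juxtaposition denotes tensor product. For a linear map $K:X\to Y$, $|K\rangle\!\rangle^{XY}=\sum_i|i\rangle^X\otimes(K|i\rangle)^Y$. For an operator $W$ on $X\otimes Y$, $W^{T_X}$ is its partial transpose on $X$. The Choi operator of $\mathcal{M}:\mathcal{L}(X)\to\mathcal{L}(Y)$ is $\sum_{ij}|i\rangle\langle j|\otimes\mathcal{M}(|i\rangle\langle j|)$. A process matrix is an operator $W$ on $PFA_IA_OB_IB_O$ such that for all finite-dimensional ancilla spaces $A_I',A_O',B_I',B_O'$ and all CPTP maps $\mathcal{M}_x:\mathcal{L}(A_IA_I')\to\mathcal{L}(A_OA_O')$, $\mathcal{M}_y:\mathcal{L}(B_IB_I')\to\mathcal{L}(B_OB_O')$ with Choi operators $M_x,M_y$, the operator $\mathrm{tr}_{A_IA_OB_IB_O}\big(W^{T_{A_IA_OB_IB_O}}(M_x\otimes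 M_y)\big)$ is the Choi operator of a CPTP map from $PA_I'B_I'$ to $FA_O'B_O'$. It is pure if for all ancilla spaces with $d_{A_I}d_{A_I'}=d_{A_O}d_{A_O'}$, $d_{B_I}d_{B_I'}=d_{B_O}d_{B_O'}$, $d_Pd_{A_I'}d_{B_I'}=d_Fd_{A_O'}d_{B_O'}$ and all unitaries $U:A_IA_I'\to A_OA_O'$, $V:B_IB_I'\to B_OB_O'$, the operator $\mathrm{tr}_{A_IA_OB_IB_O}\big(W^{T_{A_IA_OB_IB_O}}(|U\rangle\!\rangle\langle\!\langle U|\otimes|V\rangle\!\rangle\langle\!\langle V|)\big)$ is the Choi operator of a unitary channel from $PA_I'B_I'$ to $FA_O'B_O'$. *)

(* Defs.v *)
From HB Require Import structures.
From mathcomp Require Import all_boot all_order all_algebra.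
From mathcomp Require Import complex.
From mathcomp Require Import Rstruct.
From Stdlib Require Rdefinitions.
Set Implicit Arguments. Unset Strict Implicit. Unset Printing Implicit Defensive.
Import Order.TTheory GRing.Theory Num.Theory.
Local Open Scope ring_scope.

Definition CC : numClosedFieldType := complex Rdefinitions.R.

Section QuantumDefs.
Variable C : numClosedFieldType.

(* A finite-dimensional Hilbert space is given by (the finType indexing) its
   computational basis; the tensor product X (x) Y has basis X * Y. *)
Definition ket (X : finType) := X -> C.
Arguments ket X%_type.
Definition op (X : finType) := X -> X -> C.
Arguments op X%_type.
(* a linear map X -> Y, as its matrix (row index in Y, column index in X) *)
Definition lmap (X Y : finType) := Y -> X -> C.
Arguments lmap X%_type Y%_type.

Definition adj (X Y : finType) (K : lmap X Y) : lmap Y X := fun x y => (K y x)^*.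
Definition lcomp (X Y Z : finType) (K : lmap Y Z) (L : lmap X Y) : lmap X Z :=
  fun z x => \sum_(y : Y) K z y * L y x.
Definition idop (X : finType) : op X := fun x x' => (x == x')%:R.
Arguments idop X%_type.

Definition unitary (X Y : finType) (U : lmap X Y) : Prop :=
  lcomp (adj U) U = idop (X:=X) /\ lcomp U (adj U) = idop (X:=Y).

Definition proj (X : finType) (psi : ket X) : op X := fun x x' => psi x * (psi x')^*.

(* |K>> = sum_i |i>^X (x) (K|i>)^Y *)
Definition dket (X Y : finType) (K : lmap X Y) : ket (X * Y) := fun xy => K xy.2 xy.1.

Definition trace (X : finType) (A : op X) : C := \sum_(x : X) A x x.

Definition psd (X : finType) (A : op X) : Prop :=
  forall v : ket X, 0 <= \sum_(x : X) \sum_(x' : X) (v x)^* * A x x' * v x'.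

Definition supmap (X Y : finType) := op X -> op Y.
Arguments supmap X%_type Y%_type.

Definition linear_supmap (X Y : finType) (M : supmap X Y) : Prop :=
  forall (a : C) (r s : op X),
    M (fun x x' => a * r x x' + s x x') = (fun y y' => a * M r y y' + M s y y').

(* id_Z (x) M applied to an operator on Z (x) X *)
Definition ampl (Z X Y : finType) (M : supmap X Y) (rho : op (Z * X)) : op (Z * Y) :=
  fun zy zy' => M (fun x x' => rho (zy.1, x) (zy'.1, x')) zy.2 zy'.2.

Definition completely_positive (X Y : finType) (M : supmap X Y) : Prop :=
  forall (Z : finType) (rho : op (Z * X)), psd rho -> psd (ampl M rho).

Definition trace_preserving (X Y : finType) (M : supmap X Y) : Prop :=
  forall rho : op X, trace (M rho) = trace rho.

Definition CPTP (X Y : finType) (M : supmap X Y) : Prop :=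
  [/\ linear_supmap M, completely_positive M & trace_preserving M].

Definition munit (X : finType) (i j : X) : op X :=
  fun x x' => ((x == i) && (x' == j))%:R.

Definition choi (X Y : finType) (M : supmap X Y) : op (X * Y) :=
  fun xy xy' => M (munit xy.1 xy'.1) xy.2 xy'.2.

Definition unitary_channel (X Y : finType) (U : lmap X Y) : supmap X Y :=
  fun rho => lcomp (lcomp U rho) (adj U).

Definition opmul (X : finType) (A B : op X) : op X := lcomp A B.
Definition tens (X Y : finType) (A : op X) (B : op Y) : op (X * Y) :=
  fun i j => A i.1 j.1 * B i.2 j.2.
Definition ptrace2 (X Y : finType) (A : op (X * Y)) : op X :=
  fun i j => \sum_(y : Y) A (i, y) (j, y).
Definition ptransp2 (X Y : finType) (A : op (X * Y)) : op (X * Y) :=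
  fun i j => A (i.1, j.2) (j.1, i.2).
(* reordering of tensor factors: f is the (bijective) relabelling of basis
   elements from the new ordering Y to the old ordering X *)
Definition relabel (X Y : finType) (f : Y -> X) (A : op X) : op Y :=
  fun i j => A (f i) (f j).

Section Link.
Variables (P F AI AO BI BO AI' AO' BI' BO' : finType).

(* tr_{AI AO BI BO}( W^{T_{AI AO BI BO}} (Mx (x) My) ), where W is an operator on
   P F AI AO BI BO, Mx on (AI AI')(AO AO'), My on (BI BI')(BO BO'); the result
   is an operator on (P AI' BI') (F AO' BO'). *)
Definition link_op (W : op (P * F * AI * AO * BI * BO))
    (Mx : op ((AI * AI') * (AO * AO'))) (My : op ((BI * BI') * (BO * BO')))
  : op ((P * AI' * BI') * (F * AO' * BO')) :=
  let W1 : op ((P * F) * (AI * AO * BI * BO)) :=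
    relabel (fun u : (P * F) * (AI * AO * BI * BO) =>
               let: ((p, f), (ai, ao, bi, bo)) := u in (p, f, ai, ao, bi, bo)) W in
  (* W^{T_S} (x) 1 on ((P F) S) T, with T = AI' AO' BI' BO' *)
  let L : op (((P * F) * (AI * AO * BI * BO)) * (AI' * AO' * BI' * BO')) :=
    tens (ptransp2 W1) (idop (X:=(AI' * AO' * BI' * BO'))) in
  (* 1_{PF} (x) Mx (x) My on ((P F) S) T *)
  let R : op (((P * F) * (AI * AO * BI * BO)) * (AI' * AO' * BI' * BO')) :=
    relabel (fun u : ((P * F) * (AI * AO * BI * BO)) * (AI' * AO' * BI' * BO') =>
               let: ((pf, (ai, ao, bi, bo)), (ai', ao', bi', bo')) := u in
               (pf, (((ai, ai'), (ao, ao')), ((bi, bi'), (bo, bo')))))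
      (tens (idop (X:=P * F)) (tens Mx My)) in
  let Prod := opmul L R in
  let Prod' : op (((P * F) * (AI' * AO' * BI' * BO')) * (AI * AO * BI * BO)) :=
    relabel (fun u : ((P * F) * (AI' * AO' * BI' * BO')) * (AI * AO * BI * BO) =>
               let: ((pf, t), s) := u in ((pf, s), t)) Prod in
  let T := ptrace2 Prod' in
  relabel (fun u : (P * AI' * BI') * (F * AO' * BO') =>
             let: ((p, ai', bi'), (f, ao', bo')) := u in
             ((p, f), (ai', ao', bi', bo'))) T.

End Link.

Definition process_matrix (P F AI AO BI BO : finType)
    (W : op (P * F * AI * AO * BI * BO)) : Prop :=
  forall (AI' AO' BI' BO' : finType)
         (Mxm : supmap (AI * AI') (AO * AO')) (Mym : supmap (BI * BI') (BO * BO')),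
    CPTP Mxm -> CPTP Mym ->
    exists N : supmap (P * AI' * BI') (F * AO' * BO'),
      CPTP N /\ choi N = link_op W (choi Mxm) (choi Mym).

Definition pure_process (P F AI AO BI BO : finType)
    (W : op (P * F * AI * AO * BI * BO)) : Prop :=
  forall (AI' AO' BI' BO' : finType)
         (U : lmap (AI * AI') (AO * AO')) (V : lmap (BI * BI') (BO * BO')),
    (#|AI| * #|AI'| = #|AO| * #|AO'|)%N ->
    (#|BI| * #|BI'| = #|BO| * #|BO'|)%N ->
    (#|P| * #|AI'| * #|BI'| = #|F| * #|AO'| * #|BO'|)%N ->
    unitary U -> unitary V ->
    exists Y : lmap (P * AI' * BI') (F * AO' * BO'),
      unitary Y /\
      choi (unitary_channel Y) = link_op W (proj (dket U)) (proj (dket V)).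

End QuantumDefs.

Arguments ket C X%_type.
Arguments op C X%_type.
Arguments lmap C X%_type Y%_type.
Arguments supmap C X%_type Y%_type.

Definition reverse_ket (C : numClosedFieldType) (P A B : finType)
    (w : ket C (P * P * A * A * B * B)) : ket C (P * P * A * A * B * B) :=
  fun u => let: (p, f, ai, ao, bi, bo) := u in (w (f, p, ao, ai, bo, bi))^*.

(* Main.v *)
Require Import Defs.
From mathcomp Require Import all_boot all_order all_algebra.
From mathcomp Require Import ring.
From Stdlib Require Import FunctionalExtensionality.
Set Implicit Arguments. Unset Strict Implicit. Unset Printing Implicit Defensive.
Import Order.TTheory GRing.Theory Num.Theory.
Local Open Scope ring_scope.


Section Gen.
Variable C : numClosedFieldType.

Lemma sum_pair (X Y : finType) (F : X * Y -> C) :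
  \sum_(z : X * Y) F z = \sum_(x : X) \sum_(y : Y) F (x, y).
Proof. by rewrite pair_bigA; apply: eq_bigr => -[]. Qed.

Lemma sum_dl (X : finType) (a : X) (F : X -> C) :
  \sum_x (x == a)%:R * F x = F a.
Proof.
rewrite (bigD1 a) //= eqxx mul1r big1 ?addr0 // => x /negbTE ->.
by rewrite mul0r.
Qed.
Lemma sum_dl' (X : finType) (a : X) (F : X -> C) :
  \sum_x (a == x)%:R * F x = F a.
Proof. by rewrite -[RHS](sum_dl a); apply: eq_bigr => x _; rewrite eq_sym. Qed.
Lemma sum_dr (X : finType) (a : X) (F : X -> C) :
  \sum_x F x * (x == a)%:R = F a.
Proof. by rewrite -[RHS](sum_dl a); apply: eq_bigr => x _; rewrite mulrC. Qed.
Lemma sum_dr' (X : finType) (a : X) (F : X -> C) :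
  \sum_x F x * (a == x)%:R = F a.
Proof. by rewrite -[RHS](sum_dl a); apply: eq_bigr => x _; rewrite mulrC eq_sym. Qed.

Definition qf (X : finType) (A : op C X) (v : ket C X) :=
  \sum_(x : X) \sum_(x' : X) (v x)^* * A x x' * v x'.

Lemma psdE (X : finType) (A : op C X) : psd A <-> forall v, 0 <= qf A v.
Proof. by []. Qed.

Lemma psd_proj (X : finType) (u : ket C X) : psd (proj u).
Proof.
move=> v.
have -> : \sum_(x : X) \sum_(x' : X) (v x)^* * proj u x x' * v x' =
   (\sum_x (v x)^* * u x) * (\sum_x (v x)^* * u x)^*.
  rewrite rmorph_sum big_distrl /=; apply: eq_bigr => x _.
  rewrite big_distrr /=; apply: eq_bigr => x' _.
  by rewrite /proj rmorphM /= conjCK; ring.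
exact: mul_conjC_ge0.
Qed.

Lemma psd_sum (X I : finType) (A : I -> op C X) :
  (forall i, psd (A i)) -> psd (fun x x' => \sum_i A i x x').
Proof.
move=> H v.
have -> : \sum_(x : X) \sum_(x' : X) (v x)^* * (\sum_i A i x x') * v x' =
   \sum_i \sum_(x : X) \sum_(x' : X) (v x)^* * A i x x' * v x'.
  under eq_bigr => x _ do under eq_bigr => x' _ do rewrite big_distrr big_distrl /=.
  under eq_bigr => x _ do rewrite exchange_big /=.
  by rewrite exchange_big.
by apply: sumr_ge0 => i _; apply: H.
Qed.

Lemma mul_sum2 (I J : finType) (a : I -> C) (b : J -> C) c :
  (\sum_i a i) * c * (\sum_j b j) = \sum_i \sum_j a i * c * b j.
Proof.
rewrite !big_distrl /=; apply: eq_bigr => i _; by rewrite big_distrr /=.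
Qed.

Lemma mul_sum2' (I J : finType) (t : I -> J -> C) c d :
  c * (\sum_i \sum_j t i j) * d = \sum_i \sum_j c * t i j * d.
Proof.
rewrite big_distrr big_distrl /=; apply: eq_bigr => i _.
by rewrite big_distrr big_distrl /=.
Qed.

Lemma exchange4 (I J K L : finType) (f : I -> J -> K -> L -> C) :
  \sum_i \sum_j \sum_k \sum_l f i j k l = \sum_k \sum_l \sum_i \sum_j f i j k l.
Proof.
under eq_bigr => i _ do rewrite exchange_big /=.
under eq_bigr => i _ do under eq_bigr => k _ do rewrite exchange_big /=.
rewrite exchange_big /=; apply: eq_bigr => k _.
by rewrite exchange_big.
Qed.

Lemma psd_congr (X Y : finType) (L : X -> Y -> C) (A : op C X) :
  psd A -> psd (fun y y' => \sum_x \sum_x' (L x y)^* * A x x' * L x' y').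
Proof.
move=> H v; have := H (fun x => \sum_y L x y * v y).
congr (_ <= _).
under eq_bigr => x _ do under eq_bigr => x' _ do
  rewrite rmorph_sum mul_sum2 /=.
under [RHS]eq_bigr => y _ do under eq_bigr => y' _ do rewrite mul_sum2'.
rewrite exchange4; apply: eq_bigr => y _; apply: eq_bigr => y' _.
apply: eq_bigr => x _; apply: eq_bigr => x' _.
by rewrite rmorphM /=; ring.
Qed.

End Gen.


Section Herm.
Variable C : numClosedFieldType.

Lemma qf_two (X : finType) (A : op C X) (x y : X) (c : C) :
  qf A (fun z => (z == x)%:R + c * (z == y)%:R) =
  A x x + A x y * c + c^* * A y x + c^* * A y y * c.
Proof.
rewrite /qf.
have E : forall z z', ((z == x)%:R + c * (z == y)%:R)^* * A z z' *
       ((z' == x)%:R + c * (z' == y)%:R) =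
   (z == x)%:R * (A z z' * ((z' == x)%:R + c * (z' == y)%:R)) +
   (z == y)%:R * (c^* * (A z z' * ((z' == x)%:R + c * (z' == y)%:R))).
  by move=> z z'; rewrite rmorphD rmorphM /= !conjC_nat; ring.
under eq_bigr => z _ do under eq_bigr => z' _ do rewrite E.
rewrite exchange_big /=.
under eq_bigr => z' _ do rewrite big_split /= sum_dl sum_dl.
have E2 : forall z', A x z' * ((z' == x)%:R + c * (z' == y)%:R) +
     c^* * (A y z' * ((z' == x)%:R + c * (z' == y)%:R)) =
   (z' == x)%:R * (A x z' + c^* * A y z') +
   (z' == y)%:R * (A x z' * c + c^* * A y z' * c).
  by move=> z'; ring.
under eq_bigr => z' _ do rewrite E2.
by rewrite big_split /= sum_dl sum_dl; ring.
Qed.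

Lemma psd_herm (X : finType) (A : op C X) :
  psd A -> forall x y, A y x = (A x y)^*.
Proof.
move=> H x y.
have R c : (A x x + A x y * c + c^* * A y x + c^* * A y y * c) \is Num.real.
  by rewrite -qf_two; apply: ger0_real; apply: H.
have Rx : A x x \is Num.real.
  by have := R 0; rewrite !(mulr0, rmorph0, mul0r, addr0).
have Ry : A y y \is Num.real.
  have := H (fun z => (z == y)%:R + 0 * (z == x)%:R).
  rewrite -/(qf _ _) qf_two !(mulr0, rmorph0, mul0r, addr0).
  exact: ger0_real.
have /CrealP E1 := R 1.
have /CrealP E2 := R 'i.
move: E1 E2; rewrite !rmorphD !rmorphM /= !rmorph1 !conjCK conjCi.
rewrite !mulr1 !mul1r.
have /CrealP -> := Rx; have /CrealP -> := Ry.
set a := A x y; set b := A y x; set a' := a^*; set b' := b^*.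
move=> /eqP E1 /eqP E2.
rewrite -subr_eq0 in E1; rewrite -subr_eq0 in E2.
move/eqP: E1 => E1; move/eqP: E2 => E2.
have E3 : 'i * (b - a + b' - a') = 0.
  rewrite -E2; clearbody a b a' b'; ring.
move/eqP: E3; rewrite mulf_eq0 (negbTE (neq0Ci _)) /= => /eqP E3.
have E4 : (b' - a) *+ 2 = 0.
  by rewrite -[RHS](addr0 0) -{1}E1 -{1}E3; clearbody a b a' b'; ring.
move/eqP: E4; rewrite mulrn_eq0 /= subr_eq0 => /eqP Hb.
by rewrite /a' -Hb /b' conjCK.
Qed.

End Herm.


Section Decomp.
Variable C : numClosedFieldType.

Lemma sum_enum (X : finType) (F : X -> C) :
  \sum_(x : X) F x = \sum_(i < #|X|) F (enum_val i).
Proof.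
rewrite (reindex (@enum_val X X)) //.
by exists (@enum_rank X) => i _; [apply: enum_valK | apply: enum_rankK].
Qed.

Lemma psd_decomp (X : finType) (A : op C X) :
  psd A -> exists v : 'I_#|X| -> ket C X,
    forall x x', A x x' = \sum_k proj (v k) x x'.
Proof.
move=> H.
pose n := #|X|.
pose Am : 'M[C]_n := \matrix_(i, j) A (enum_val i) (enum_val j).
have Hh : (Am ^t*)%sesqui = Am.
  apply/matrixP => i j; rewrite !mxE.
  by rewrite -(psd_herm H).
have Hn : Am \is normalmx by apply/normalmxP; rewrite Hh.
have /orthomx_spectralP := Hn.
set Q := spectralmx Am; set d := spectral_diag Am => HA.
have QU : Q \is unitarymx by apply: spectral_unitarymx.
rewrite invmx_unitary // in HA.
have Hd : forall k, 0 <= d 0 k.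
  move=> k.
  have E : (Q *m Am *m (Q ^t*)%sesqui) = diag_mx d.
    rewrite HA !mulmxA (unitarymxP QU) mul1mx -!mulmxA (unitarymxP QU).
    by rewrite mulmx1.
  have := H (fun t => (Q k (enum_rank t))^*).
  rewrite /psd.
  have -> : \sum_x \sum_x' ((Q k (enum_rank x))^*)^* * A x x' * (Q k (enum_rank x'))^*
     = (Q *m Am *m (Q ^t*)%sesqui) k k.
    rewrite exchange_big mxE sum_enum; apply: eq_bigr => i _.
    rewrite mxE big_distrl sum_enum /=; apply: eq_bigr => j _.
    by rewrite !mxE !enum_valK conjCK.
  by rewrite E mxE eqxx mulr1n.
exists (fun k t => sqrtC (d 0 k) * (Q k (enum_rank t))^*).
move=> x x'.
have -> : A x x' = Am (enum_rank x) (enum_rank x') by rewrite mxE !enum_rankK.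
rewrite HA mul_mx_diag !mxE; apply: eq_bigr => k _.
rewrite /proj !mxE rmorphM /= conjCK.
have Hs : (sqrtC (d 0 k))^* = sqrtC (d 0 k).
  by apply: conj_Creal; apply: ger0_real; rewrite sqrtC_ge0.
rewrite Hs.
have Hss : sqrtC (d 0 k) * sqrtC (d 0 k) = d 0 k by rewrite -expr2 sqrtCK.
move: (sqrtC (d 0 k)) Hss => s <-; ring.
Qed.

End Decomp.


Section LinkE.
Variable C : numClosedFieldType.
Variables (P F AI AO BI BO AI' AO' BI' BO' : finType).

Lemma sum_dmid (X : finType) (c : X) (a : C) (G : X -> C) :
  \sum_y a * (c == y)%:R * G y = a * G c.
Proof. by rewrite -(sum_dl' c (fun y => a * G y)); apply: eq_bigr => y _; ring. Qed.

Lemma sum_dmid2 (X : finType) (c : X) (G H : X -> C) :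
  \sum_x G x * ((x == c)%:R * H x) = G c * H c.
Proof. by rewrite -(sum_dl c (fun y => G y * H y)); apply: eq_bigr => y _; ring. Qed.

Lemma link_opE (W : op C (P * F * AI * AO * BI * BO))
    (Mx : op C ((AI * AI') * (AO * AO'))) (My : op C ((BI * BI') * (BO * BO')))
    p ai' bi' f ao' bo' p2 ai2' bi2' f2 ao2' bo2' :
  link_op W Mx My ((p, ai', bi'), (f, ao', bo')) ((p2, ai2', bi2'), (f2, ao2', bo2')) =
  \sum_(s : AI * AO * BI * BO) \sum_(s3 : AI * AO * BI * BO)
     W (p, f, s3.1.1.1, s3.1.1.2, s3.1.2, s3.2) (p2, f2, s.1.1.1, s.1.1.2, s.1.2, s.2) *
     (Mx ((s3.1.1.1, ai'), (s3.1.1.2, ao')) ((s.1.1.1, ai2'), (s.1.1.2, ao2')) *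
      My ((s3.1.2, bi'), (s3.2, bo')) ((s.1.2, bi2'), (s.2, bo2'))).
Proof.
rewrite /link_op /relabel /ptrace2 /opmul /lcomp /tens /ptransp2 /=.
apply: eq_bigr => -[[[ai ao] bi] bo] _ /=.
rewrite sum_pair /= /idop.
under eq_bigr => x _ do rewrite sum_dmid /=.
rewrite sum_pair exchange_big /=; apply: eq_bigr => -[[[ai3 ao3] bi3] bo3] _ /=.
rewrite sum_dmid2 /=.
by [].
Qed.
End LinkE.


Section LinkProps.
Variable C : numClosedFieldType.
Variables (P F AI AO BI BO AI' AO' BI' BO' : finType).

Lemma exchange5 (I J K L M : finType) (f : I -> J -> K -> L -> M -> C) :
  \sum_a \sum_b \sum_c \sum_d \sum_e f a b c d e =
  \sum_d \sum_e \sum_a \sum_b \sum_c f a b c d e.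
Proof.
under eq_bigr => a _ do under eq_bigr => b _ do rewrite exchange_big /=.
under eq_bigr => a _ do under eq_bigr => b _ do under eq_bigr => d _ do
  rewrite exchange_big /=.
under eq_bigr => a _ do rewrite exchange_big /=.
under eq_bigr => a _ do under eq_bigr => d _ do rewrite exchange_big /=.
rewrite exchange_big /=; apply: eq_bigr => d _.
by rewrite exchange_big.
Qed.

Definition yk (w : ket C (P * F * AI * AO * BI * BO))
    (m : ket C ((AI * AI') * (AO * AO'))) (n : ket C ((BI * BI') * (BO * BO')))
  : ket C ((P * AI' * BI') * (F * AO' * BO')) :=
  fun u => \sum_(s3 : AI * AO * BI * BO)
     w (u.1.1.1, u.2.1.1, s3.1.1.1, s3.1.1.2, s3.1.2, s3.2) *
     (m ((s3.1.1.1, u.1.1.2), (s3.1.1.2, u.2.1.2)) *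
      n ((s3.1.2, u.1.2), (s3.2, u.2.2))).

Lemma link_proj w m n a b :
  link_op (proj w) (proj m) (proj n) a b = proj (yk w m n) a b.
Proof.
case: a b => [[[p ai'] bi']] [[f ao'] bo'] [[[p2 ai2'] bi2']] [[f2 ao2'] bo2'].
rewrite link_opE /proj /yk /= rmorph_sum big_distrr /=.
apply: eq_bigr => s _; rewrite big_distrl /=; apply: eq_bigr => s3 _.
by rewrite !rmorphM /=; ring.
Qed.

Lemma link_sumX (I : finType) (W : op C (P * F * AI * AO * BI * BO))
    (Xk : I -> op C ((AI * AI') * (AO * AO'))) (Y : op C ((BI * BI') * (BO * BO'))) a b :
  link_op W (fun i j => \sum_k Xk k i j) Y a b = \sum_k link_op W (Xk k) Y a b.
Proof.
case: a b => [[[p ai'] bi']] [[f ao'] bo'] [[[p2 ai2'] bi2']] [[f2 ao2'] bo2'].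
under eq_bigr => k _ do rewrite link_opE.
rewrite link_opE [RHS]exchange_big; apply: eq_bigr => s _.
rewrite [RHS]exchange_big; apply: eq_bigr => s3 _.
by rewrite big_distrl big_distrr /=; apply: eq_bigr => k _; ring.
Qed.

Lemma link_sumY (I : finType) (W : op C (P * F * AI * AO * BI * BO))
    (X : op C ((AI * AI') * (AO * AO'))) (Yk : I -> op C ((BI * BI') * (BO * BO'))) a b :
  link_op W X (fun i j => \sum_k Yk k i j) a b = \sum_k link_op W X (Yk k) a b.
Proof.
case: a b => [[[p ai'] bi']] [[f ao'] bo'] [[[p2 ai2'] bi2']] [[f2 ao2'] bo2'].
under eq_bigr => k _ do rewrite link_opE.
rewrite link_opE [RHS]exchange_big; apply: eq_bigr => s _.
rewrite [RHS]exchange_big; apply: eq_bigr => s3 _.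
by rewrite big_distrr big_distrr /=; apply: eq_bigr => k _; ring.
Qed.

Lemma link_ptrace (W : op C (P * F * AI * AO * BI * BO))
    (X : op C ((AI * AI') * (AO * AO'))) (Y : op C ((BI * BI') * (BO * BO')))
    p ai' bi' p2 ai2' bi2' :
  \sum_(b : F * AO' * BO') link_op W X Y ((p, ai', bi'), b) ((p2, ai2', bi2'), b) =
  \sum_(s : AI * AO * BI * BO) \sum_(s3 : AI * AO * BI * BO)
     (\sum_f W (p, f, s3.1.1.1, s3.1.1.2, s3.1.2, s3.2) (p2, f, s.1.1.1, s.1.1.2, s.1.2, s.2)) *
     ((\sum_ao' X ((s3.1.1.1, ai'), (s3.1.1.2, ao')) ((s.1.1.1, ai2'), (s.1.1.2, ao'))) *
      (\sum_bo' Y ((s3.1.2, bi'), (s3.2, bo')) ((s.1.2, bi2'), (s.2, bo')))).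
Proof.
rewrite sum_pair sum_pair /=.
under eq_bigr => f _ do under eq_bigr => ao' _ do under eq_bigr => bo' _ do
  rewrite link_opE.
rewrite exchange5; apply: eq_bigr => s _; apply: eq_bigr => s3 _.
rewrite big_distrl /=; apply: eq_bigr => f _.
rewrite big_distrl /= big_distrr /=; apply: eq_bigr => ao' _.
by rewrite big_distrr /= big_distrr /=.
Qed.

End LinkProps.


Section Pure.
Variable C : numClosedFieldType.

Lemma natr_andb (a b : bool) : (a && b)%:R = a%:R * b%:R :> C.
Proof. by case: a; case: b; rewrite ?mul1r ?mul0r. Qed.

Lemma adjK (X Y : finType) (U : lmap C X Y) : adj (adj U) = U.
Proof.
by apply: functional_extensionality => y; apply: functional_extensionality => x;
  rewrite /adj conjCK.
Qed.

Lemma unitary_adj (X Y : finType) (U : lmap C X Y) : unitary U -> unitary (adj U).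
Proof. by case=> H1 H2; split; rewrite adjK. Qed.

Lemma choi_uc (X Y : finType) (U : lmap C X Y) x y x2 y2 :
  choi (unitary_channel U) (x, y) (x2, y2) = U y x * (U y2 x2)^*.
Proof.
rewrite /choi /unitary_channel /lcomp /munit /adj /=.
rewrite -(sum_dl x2 (fun z => U y x * (U y2 z)^* )).
apply: eq_bigr => z _.
transitivity ((\sum_z' (z' == x)%:R * (U y z' * (z == x2)%:R)) * (U y2 z)^*).
  by congr (_ * _); apply: eq_bigr => z' _; rewrite natr_andb; ring.
by rewrite sum_dl; ring.

Qed.

Definition swap4 (A B : finType) (s : A * A * B * B) : A * A * B * B :=
  (s.1.1.2, s.1.1.1, s.2, s.1.2).

Lemma swap4K (A B : finType) : involutive (@swap4 A B).
Proof. by case=> [[[a1 a2] b1] b2]. Qed.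

Lemma link_rev (P A B AI' AO' BI' BO' : finType) (w : ket C (P * P * A * A * B * B))
    (U : lmap C (A * AI') (A * AO')) (V : lmap C (B * BI') (B * BO')) a b a2 b2 :
  link_op (proj (reverse_ket w)) (proj (dket U)) (proj (dket V)) (a, b) (a2, b2) =
  link_op (proj w) (proj (dket (adj U))) (proj (dket (adj V))) (b2, a2) (b, a).
Proof.
have key : forall a b, yk (reverse_ket w) (dket U) (dket V) (a, b) =
                      (yk w (dket (adj U)) (dket (adj V)) (b, a))^*.
  move=> [[p ai'] bi'] [[f ao'] bo'].
  rewrite /yk /= rmorph_sum /=.
  rewrite (reindex_inj (inv_inj (@swap4K A B))) /=.
  apply: eq_bigr => -[[[a1 a2'] b1] b2'] _ /=.
  by rewrite /dket /adj /= !rmorphM /= !conjCK.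
rewrite !link_proj /proj !key conjCK; ring.
Qed.

Lemma pure_rev (P A B : finType) (w : ket C (P * P * A * A * B * B)) :
  pure_process (proj w) -> pure_process (proj (reverse_ket w)).
Proof.
move=> H AI' AO' BI' BO' U V hA hB hP hU hV.
have [Y [HYu HY]] := H AO' AI' BO' BI' (adj U) (adj V) (esym hA) (esym hB) (esym hP)
  (unitary_adj hU) (unitary_adj hV).
exists (adj Y); split; first exact: unitary_adj.
apply: functional_extensionality => -[a b]; apply: functional_extensionality => -[a2 b2].
rewrite link_rev -HY !choi_uc /adj conjCK; ring.
Qed.

End Pure.


Section Block.
Variable C : numClosedFieldType.
Variables (X Y : finType) (Kr : Y -> X -> C).
Hypothesis I1 : forall x x2, \sum_y (Kr y x)^* * Kr y x2 = (x == x2)%:R.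

Definition Pi (y y' : Y) : C := (y == y')%:R - \sum_x Kr y x * (Kr y' x)^*.

Lemma I2 x y2 : \sum_y (Kr y x)^* * Pi y y2 = 0.
Proof.
rewrite /Pi.
under eq_bigr => y _ do rewrite mulrBr.
rewrite sumrB sum_dr.
under eq_bigr => y _ do rewrite big_distrr /=.
rewrite exchange_big /=.
under eq_bigr => x1 _ do under eq_bigr => y _ do rewrite mulrA.
under eq_bigr => x1 _ do rewrite -big_distrl /= I1.
by rewrite sum_dl' subrr.
Qed.

Lemma I3 y x2 : \sum_y' Pi y y' * Kr y' x2 = 0.
Proof.
rewrite /Pi.
under eq_bigr => y' _ do rewrite mulrBl.
rewrite sumrB sum_dl'.
under eq_bigr => y' _ do rewrite big_distrl /=.
rewrite exchange_big /=.
under eq_bigr => x1 _ do under eq_bigr => y' _ do rewrite -mulrA.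
under eq_bigr => x1 _ do rewrite -big_distrr /= I1.
by rewrite sum_dr subrr.
Qed.

Lemma I4 y y' : (Pi y y')^* = Pi y' y.
Proof.
rewrite /Pi rmorphB /= conjC_nat rmorph_sum eq_sym; congr (_ - _).
by apply: eq_bigr => x _; rewrite rmorphM /= conjCK mulrC.
Qed.

Lemma I5 y y2 : \sum_y' Pi y y' * Pi y' y2 = Pi y y2.
Proof.
rewrite {2}/Pi.
under eq_bigr => y' _ do rewrite mulrBr.
rewrite sumrB sum_dr.
under eq_bigr => y' _ do rewrite big_distrr /=.
rewrite exchange_big /=.
under eq_bigr => x1 _ do under eq_bigr => y' _ do rewrite mulrA.
under eq_bigr => x1 _ do rewrite -big_distrl /= I3.
by rewrite big1 ?subr0 // => x1 _; rewrite mul0r.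
Qed.

Definition Ub (o : Y + X) (i : X + Y) : C :=
  match o, i with
  | inl y, inl x => Kr y x
  | inl y, inr y' => Pi y y'
  | inr x', inl x => 0
  | inr x', inr y' => - (Kr y' x')^*
  end.

Lemma Ub_unitary : unitary Ub.
Proof.
split.
- apply: functional_extensionality => i; apply: functional_extensionality => i2.
  rewrite /lcomp /adj /idop big_sumType /=.
  case: i => [x|y]; case: i2 => [x2|y2] /=.
  + by rewrite I1 big1 ?addr0 // => x' _; rewrite mulr0.
  + rewrite I2 big1 ?addr0 // => x' _; rewrite rmorph0 mul0r //.
  + rewrite [X in _ + X]big1 ?addr0; last by move=> x' _; rewrite mulr0.
    rewrite -[RHS](I3 y x2); apply: eq_bigr => y' _; by rewrite I4.
  + under eq_bigr => y' _ do rewrite I4.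
    rewrite I5.
    under [X in _ + X = _]eq_bigr => x' _ do rewrite rmorphN /= conjCK mulrNN.
    by rewrite /Pi subrK.
- apply: functional_extensionality => o; apply: functional_extensionality => o2.
  rewrite /lcomp /adj /idop big_sumType /=.
  case: o => [y|x]; case: o2 => [y2|x2] /=.
  + under [X in _ + X = _]eq_bigr => y' _ do rewrite I4.
    by rewrite I5 /Pi addrC subrK.
  + rewrite big1 ?add0r; last by move=> x' _; rewrite rmorph0 mulr0.
    under eq_bigr => y' _ do rewrite rmorphN /= conjCK mulrN.
    by rewrite sumrN I3 oppr0.
  + rewrite big1 ?add0r; last by move=> x' _; rewrite mul0r.
    under eq_bigr => y' _ do rewrite I4 mulNr.
    by rewrite sumrN I2 oppr0.
  + rewrite big1 ?add0r; last by move=> x' _; rewrite mul0r.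
    under eq_bigr => y' _ do rewrite rmorphN /= conjCK mulrNN.
    by rewrite I1.
Qed.

End Block.


Section Dil.
Variable C : numClosedFieldType.

Lemma unitary_transport (X1 Y1 X2 Y2 : finType) (U : lmap C X1 Y1)
    (fi : X2 -> X1) (fo : Y2 -> Y1) :
  bijective fi -> bijective fo -> unitary U ->
  unitary (fun y x => U (fo y) (fi x)).
Proof.
move=> bi bo [H1 H2]; split.
- apply: functional_extensionality => x; apply: functional_extensionality => x2.
  have := equal_f (equal_f H1 (fi x)) (fi x2).
  rewrite /lcomp /adj /idop (reindex fo) /=; last exact: onW_bij.
  by move=> ->; rewrite (inj_eq (bij_inj bi)).
- apply: functional_extensionality => y; apply: functional_extensionality => y2.
  have := equal_f (equal_f H2 (fo y)) (fo y2).
  rewrite /lcomp /adj /idop (reindex fi) /=; last exact: onW_bij.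
  by move=> ->; rewrite (inj_eq (bij_inj bo)).
Qed.

Lemma trace_munit (X : finType) (x x2 : X) : trace (@munit C X x x2) = (x == x2)%:R.
Proof.
rewrite /trace /munit.
under eq_bigr => z _ do rewrite natr_andb.
by rewrite sum_dl eq_sym.
Qed.

Lemma psd_ext (X : finType) (A B : op C X) :
  (forall x y, A x y = B x y) -> psd A -> psd B.
Proof.
move=> E H v; have := H v; congr (_ <= _).
by apply: eq_bigr => x _; apply: eq_bigr => y _; rewrite E.
Qed.

Lemma choi_psd (X Y : finType) (M : supmap C X Y) :
  completely_positive M -> psd (choi M).
Proof.
move=> H.
pose Om : ket C (X * X) := fun u => (u.1 == u.2)%:R.
have := H X (proj Om) (psd_proj Om).
apply: psd_ext => -[z y] [z' y'].
rewrite /ampl /choi /=; congr (M _ y y').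
apply: functional_extensionality => x; apply: functional_extensionality => x'.
by rewrite /proj /Om /munit /= conjC_nat natr_andb eq_sym (eq_sym z').
Qed.

Lemma kraus (X Y : finType) (M : supmap C X Y) : CPTP M ->
  exists v : 'I_#|{: X * Y}| -> ket C (X * Y),
    (forall a b, choi M a b = \sum_k proj (v k) a b) /\
    (forall x x2, \sum_y \sum_k (v k (x, y))^* * v k (x2, y) = (x == x2)%:R).
Proof.
case=> Hl Hc Ht.
have [v Hv] := psd_decomp (choi_psd Hc).
exists v; split => // x x2.
transitivity (\sum_y choi M (x2, y) (x, y)).
  by apply: eq_bigr => y _; rewrite Hv; apply: eq_bigr => k _; rewrite /proj mulrC.
by rewrite /choi /= -/(trace _) Ht trace_munit eq_sym.
Qed.

Variables (S I' O' : finType) (n : nat) (v : 'I_n -> ket C ((S * I') * (S * O'))).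

Definition Krd : ((S * O') * 'I_n) -> (S * I') -> C := fun yk x => v yk.2 (x, yk.1).

Definition fi (u : S * (I' + (O' * 'I_n))) : (S * I') + ((S * O') * 'I_n) :=
  match u.2 with inl i' => inl (u.1, i') | inr ok => inr ((u.1, ok.1), ok.2) end.
Definition fi_inv (u : (S * I') + ((S * O') * 'I_n)) : S * (I' + (O' * 'I_n)) :=
  match u with inl si => (si.1, inl si.2) | inr sok => (sok.1.1, inr (sok.1.2, sok.2)) end.
Definition fo (u : S * ((O' * 'I_n) + I')) : ((S * O') * 'I_n) + (S * I') :=
  match u.2 with inl ok => inl ((u.1, ok.1), ok.2) | inr i' => inr (u.1, i') end.
Definition fo_inv (u : ((S * O') * 'I_n) + (S * I')) : S * ((O' * 'I_n) + I') :=
  match u with inl sok => (sok.1.1, inl (sok.1.2, sok.2)) | inr si => (si.1, inr si.2) end.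

Lemma fi_bij : bijective fi.
Proof.
by exists fi_inv; [case=> s [i'|[o k]] | case=> [[s i']|[[s o] k]]].
Qed.
Lemma fo_bij : bijective fo.
Proof.
by exists fo_inv; [case=> s [[o k]|i'] | case=> [[[s o] k]|[s i']]].
Qed.

Definition Udil : lmap C (S * (I' + (O' * 'I_n))) (S * ((O' * 'I_n) + I')) :=
  fun y x => Ub Krd (fo y) (fi x).

Hypothesis Hiso : forall x x2, \sum_y \sum_k (v k (x, y))^* * v k (x2, y) = (x == x2)%:R.

Lemma Udil_unitary : unitary Udil.
Proof.
apply: unitary_transport; [exact: fi_bij | exact: fo_bij |].
apply: Ub_unitary => x x2.
rewrite sum_pair -Hiso; apply: eq_bigr => y _; by [].
Qed.

Lemma Udil_red ai ai' ao ai2 ai2' ao2 :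
  \sum_(o : (O' * 'I_n) + I') Udil (ao, o) (ai, inl ai') * (Udil (ao2, o) (ai2, inl ai2'))^*
  = \sum_ao' \sum_k v k ((ai, ai'), (ao, ao')) * (v k ((ai2, ai2'), (ao2, ao')))^*.
Proof.
rewrite big_sumType /Udil /= [X in _ + X]big1 ?addr0; last by move=> i _; rewrite mul0r.
by rewrite sum_pair.
Qed.

End Dil.


Section CPd.
Variable C : numClosedFieldType.

Lemma sum_pair_delta (Z X : finType) (z : Z) (G : Z * X -> C) :
  \sum_(a : Z * X) (a.1 == z)%:R * G a = \sum_x G (z, x).
Proof.
rewrite sum_pair /=.
under eq_bigr => z1 _ do rewrite -big_distrr /=.
by rewrite sum_dl.
Qed.

Definition Nmap (X Y : finType) (J : op C (X * Y)) : supmap C X Y :=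
  fun rho y y' => \sum_x \sum_x' rho x x' * J (x, y) (x', y').

Lemma cp_decomp (X Y I : finType) (J : op C (X * Y)) (v : I -> ket C (X * Y)) :
  (forall a b, J a b = \sum_i proj (v i) a b) -> completely_positive (Nmap J).
Proof.
move=> HJ Z rho Hrho.
pose L i : (Z * X) -> (Z * Y) -> C := fun a u => (a.1 == u.1)%:R * (v i (a.2, u.2))^*.
apply: (psd_ext _ (psd_sum (fun i => psd_congr (L i) Hrho))).
move=> [z y] [z' y'] /=; rewrite /ampl /Nmap /=.
have E : forall i, \sum_a \sum_a' (L i a (z, y))^* * rho a a' * L i a' (z', y') =
   \sum_x \sum_x' v i (x, y) * rho (z, x) (z', x') * (v i (x', y'))^*.
  move=> i.
  transitivity (\sum_(a : Z * X) (a.1 == z)%:R * (\sum_(a' : Z * X) (a'.1 == z')%:R *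
      (v i (a.2, y) * rho a a' * (v i (a'.2, y'))^*))).
    apply: eq_bigr => a _; rewrite big_distrr /=; apply: eq_bigr => a' _.
    by rewrite /L /= rmorphM /= conjC_nat conjCK; ring.
  rewrite sum_pair_delta; apply: eq_bigr => x _.
  by rewrite sum_pair_delta.
under eq_bigr => i _ do rewrite E.
rewrite exchange_big /=; apply: eq_bigr => x _.
rewrite exchange_big /=; apply: eq_bigr => x' _.
rewrite HJ big_distrr /=; apply: eq_bigr => i _.
by rewrite /proj; ring.
Qed.

Lemma Nmap_linear (X Y : finType) (J : op C (X * Y)) : linear_supmap (Nmap J).
Proof.
move=> a r s; apply: functional_extensionality => y; apply: functional_extensionality => y'.
rewrite /Nmap big_distrr -big_split /=; apply: eq_bigr => x _.
rewrite big_distrr -big_split /=; apply: eq_bigr => x' _.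
ring.
Qed.

Lemma Nmap_choi (X Y : finType) (J : op C (X * Y)) : choi (Nmap J) = J.
Proof.
apply: functional_extensionality => -[x y]; apply: functional_extensionality => -[x2 y2].
rewrite /choi /Nmap /munit /=.
under eq_bigr => z _ do under eq_bigr => z' _ do rewrite natr_andb.
transitivity (\sum_z (z == x)%:R * \sum_z' (z' == x2)%:R * J (z, y) (z', y2)).
  apply: eq_bigr => z _; rewrite big_distrr /=; apply: eq_bigr => z' _; ring.
by rewrite sum_dl sum_dl.
Qed.

Lemma Nmap_tp (X Y : finType) (J : op C (X * Y)) :
  (forall x x', \sum_y J (x, y) (x', y) = (x == x')%:R) -> trace_preserving (Nmap J).
Proof.
move=> H rho; rewrite /trace /Nmap exchange_big /=; apply: eq_bigr => x _.
rewrite exchange_big /=.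
under eq_bigr => x' _ do rewrite -big_distrr /= H.
by rewrite sum_dr'.
Qed.

End CPd.


Section Main.
Variable C : numClosedFieldType.

Lemma inl_eq (T1 T2 : finType) (a b : T1) : (inl a == inl b :> T1 + T2) = (a == b).
Proof. by apply/eqP/eqP => [[]|->]. Qed.

Lemma proc_rev (P A B : finType) (w : ket C (P * P * A * A * B * B)) :
  pure_process (proj w) -> process_matrix (proj (reverse_ket w)).
Proof.
move=> Hp AI' AO' BI' BO' Mx My HMx HMy.
have Hpr := pure_rev Hp.
have [vx [Hvx Isx]] := kraus HMx.
have [vy [Hvy Isy]] := kraus HMy.
exists (Nmap (link_op (proj (reverse_ket w)) (choi Mx) (choi My))).
rewrite Nmap_choi; split => //.
split.
- exact: Nmap_linear.
- apply: (cp_decomp (v := fun kl => yk (reverse_ket w) (vx kl.1) (vy kl.2))) => a b.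
  have -> : choi Mx = (fun i j => \sum_k proj (vx k) i j).
    by apply: functional_extensionality => i; apply: functional_extensionality => j.
  have -> : choi My = (fun i j => \sum_k proj (vy k) i j).
    by apply: functional_extensionality => i; apply: functional_extensionality => j.
  rewrite link_sumX sum_pair; apply: eq_bigr => k _.
  rewrite link_sumY; apply: eq_bigr => l _; exact: link_proj.
- apply: Nmap_tp => -[[p ai'] bi'] [[p2 ai2'] bi2'].
  have [Y [[HY1 HY2] HY]] := Hpr _ _ _ _ (Udil vx) (Udil vy)
    ltac:(by rewrite !card_sum !card_prod addnC)
    ltac:(by rewrite !card_sum !card_prod addnC)
    ltac:(by rewrite !card_sum !card_prod (addnC #|AI'|) (addnC #|BI'|))
    (Udil_unitary Isx) (Udil_unitary Isy).
  transitivity (\sum_b link_op (proj (reverse_ket w)) (proj (dket (Udil vx)))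
      (proj (dket (Udil vy))) ((p, inl ai', inl bi'), b) ((p2, inl ai2', inl bi2'), b)).
    rewrite !link_ptrace; apply: eq_bigr => s _; apply: eq_bigr => s3 _.
    congr (_ * (_ * _)).
    + rewrite /proj /dket /= Udil_red; apply: eq_bigr => ao' _; exact: Hvx.
    + rewrite /proj /dket /= Udil_red; apply: eq_bigr => bo' _; exact: Hvy.
  rewrite -HY.
  under eq_bigr => b _ do rewrite choi_uc mulrC.
  have := equal_f (equal_f HY1 (p2, inl ai2', inl bi2')) (p, inl ai', inl bi').
  rewrite /lcomp /adj /idop => ->.
  by rewrite !xpair_eqE !inl_eq eq_sym (eq_sym ai2') (eq_sym bi2').
Qed.

End Main.

Theorem mainTheorem10 (P A B : finType) (w : ket CC (P * P * A * A * B * B)) :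
  process_matrix (proj w) /\ pure_process (proj w) ->
  process_matrix (proj (reverse_ket w)) /\ pure_process (proj (reverse_ket w)).
Proof.
case=> _ Hp; split; [exact: proc_rev | exact: pure_rev].
Qed.
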